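(* Let $\epsilon,\delta\in\{1,i\}$. Let $(M,g)$ be a surface with isothermal coordinates $(x,y)$, $g=e^{f}dv\,dw$, $v=x+\epsilon y$, $w=x-\epsilon y$, and $(N,h)$ a surface with isothermal coordinates $(R,S)$, $h=e^{F(V,W)}dV\,dW=e^F(dR^2-\delta^2dS^2)$, $V=R+\delta S$, $W=R-\delta S$, with curvature $K_N=-2F_{VW}e^{-F}$. Let $u=(R,S):M\to N$ be a nontrivial harmonic map with nonvanishing Jacobian, with $(x,y)$ specific coordinates for $u$ (i.e. $e^FV_vW_v=1=e^FV_wW_w$), and let $\Omega,\Theta$ be functions with $$R_x=2e^{-F/2}\cosh\Omega\cosh\Theta,\quad R_y=2\epsilon e^{-F/2}\sinh\Omega\sinh\Theta,\quad S_x=\tfrac{2}{\delta}e^{-F/2}\cosh\Omega\sinh\Theta,\quad S_y=\tfrac{2\epsilon}{\delta}e^{-F/2}\sinh\Omega\cosh\Theta.$$ Then the equation $$2\Theta_{vw}=e^{-F}\Big((F_V^2-F_{VV})e^{2\Theta}-(F_W^2-F_{WW})e^{-2\Theta}\Big)$$ is the Bäcklund transform of the equation $$\Omega_{vw}=-\frac{K_N}{2}\sinh(2\Omega),$$ where $\Theta$ and $\Omega$ are related by $$\Omega_x-\frac1\epsilon\Theta_y=\frac12F_x\tanh\Omega,\qquad \Omega_y-\epsilon\Theta_x=\frac12F_y\coth\Omega,$$ with $F_x=F_RR_x+F_SS_x$, $F_y=F_RR_y+F_SS_y$. That is, $\Theta$ satisfies the first equation, $\Omega$ satisfies the second, and the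 two are connected by the displayed first-order system.
   Context: Derivatives with respect to $v,w$ are $\partial_v=\tfrac12(\partial_x+\tfrac1\epsilon\partial_y)$, $\partial_w=\tfrac12(\partial_x-\tfrac1\epsilon\partial_y)$. A map $u$ is harmonic if it satisfies the Euler–Lagrange equations of $E(u)=\frac12\int_M e^{F(V,W)}(V_vW_w+V_wW_v)\,dv\,dw$; it is nontrivial if $V_vW_vV_wW_w\neq0$. A Bäcklund transformation is a system of first-order PDEs relating solutions of one PDE to solutions of another PDE; one solution is then called the Bäcklund transform of the other. *)

(* Defs.v *)
From Stdlib Require Import Reals.
From Coquelicot Require Import Coquelicot.
Open Scope R_scope.

Definition px (g : R -> R -> R) : R -> R -> R :=
  fun x y => Derive (fun t => g t y) x.
Definition py (g : R -> R -> R) : R -> R -> R :=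
  fun x y => Derive (fun t => g x t) y.

Fixpoint Ck (k : nat) (D : R -> R -> Prop) (g : R -> R -> R) : Prop :=
  (forall x y, D x y ->
     continuous (fun p : R * R => g (fst p) (snd p)) (x, y)) /\
  match k with
  | O => True
  | S k' =>
      (forall x y, D x y ->
         ex_derive (fun t => g t y) x /\ ex_derive (fun t => g x t) y) /\
      Ck k' D (px g) /\ Ck k' D (py g)
  end.

Definition smooth_on (D : R -> R -> Prop) (g : R -> R -> R) : Prop :=
  forall k, Ck k D g.

Definition open2 (D : R -> R -> Prop) : Prop :=
  open (fun p : R * R => D (fst p) (snd p)).

Definition lift (g : R -> R -> R) : R -> R -> C := fun x y => RtoC (g x y).

Definition csmooth_on (D : R -> R -> Prop) (h : R -> R -> C) : Prop :=
  smooth_on D (fun x y => Re (h x y)) /\ smooth_on D (fun x y => Im (h x y)).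

Definition cpx (h : R -> R -> C) : R -> R -> C :=
  fun x y => (px (fun a b => Re (h a b)) x y, px (fun a b => Im (h a b)) x y).
Definition cpy (h : R -> R -> C) : R -> R -> C :=
  fun x y => (py (fun a b => Re (h a b)) x y, py (fun a b => Im (h a b)) x y).

(** For coordinates v = x + e y, w = x - e y (e in {1, i}):
    d_v = 1/2 (d_x + (1/e) d_y),  d_w = 1/2 (d_x - (1/e) d_y). *)
Definition dplus (e : C) (h : R -> R -> C) : R -> R -> C :=
  fun x y => (/ 2 * (cpx h x y + / e * cpy h x y))%C.
Definition dminus (e : C) (h : R -> R -> C) : R -> R -> C :=
  fun x y => (/ 2 * (cpx h x y - / e * cpy h x y))%C.

Definition Cexp (z : C) : C :=
  (RtoC (exp (Re z)) * (cos (Im z), sin (Im z)))%C.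
Definition Ccosh (z : C) : C := ((Cexp z + Cexp (- z)) / 2)%C.
Definition Csinh (z : C) : C := ((Cexp z - Cexp (- z)) / 2)%C.
Definition Ctanh (z : C) : C := (Csinh z / Ccosh z)%C.
Definition Ccoth (z : C) : C := (Ccosh z / Csinh z)%C.

(** The setting.  eps : type of M (v = x + eps y), dlt : type of N
    (V = R + dlt S, W = R - dlt S).
    F : the conformal factor of h as a (real) function of (R, S). *)

Definition Vf (dlt : C) (Rf Sf : R -> R -> R) : R -> R -> C :=
  fun x y => (RtoC (Rf x y) + dlt * RtoC (Sf x y))%C.
Definition Wf (dlt : C) (Rf Sf : R -> R -> R) : R -> R -> C :=
  fun x y => (RtoC (Rf x y) - dlt * RtoC (Sf x y))%C.

Definition onu (G : R -> R -> C) (Rf Sf : R -> R -> R) : R -> R -> C :=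
  fun x y => G (Rf x y) (Sf x y).

Definition F_V dlt F := dplus dlt (lift F).
Definition F_W dlt F := dminus dlt (lift F).
Definition F_VV dlt F := dplus dlt (dplus dlt (lift F)).
Definition F_WW dlt F := dminus dlt (dminus dlt (lift F)).
Definition F_VW dlt F := dplus dlt (dminus dlt (lift F)).

Definition K_N (dlt : C) (F : R -> R -> R) : R -> R -> C :=
  fun r s => (- 2 * F_VW dlt F r s * RtoC (exp (- F r s)))%C.

(** Harmonicity: the Euler-Lagrange equations of
    E(u) = 1/2 \int e^{F(V,W)} (V_v W_w + V_w W_v) dv dw,
    with L = 1/2 e^F (V_v W_w + V_w W_v):
      dL/dV - d_v (dL/dV_v) - d_w (dL/dV_w) = 0,
      dL/dW - d_v (dL/dW_v) - d_w (dL/dW_w) = 0. *)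
Definition harmonic_on (D : R -> R -> Prop) (eps dlt : C)
    (F : R -> R -> R) (Rf Sf : R -> R -> R) : Prop :=
  let V := Vf dlt Rf Sf in
  let W := Wf dlt Rf Sf in
  let eF := fun x y => RtoC (exp (F (Rf x y) (Sf x y))) in
  let Q := fun x y =>
     (dplus eps V x y * dminus eps W x y + dminus eps V x y * dplus eps W x y)%C in
  forall x y, D x y ->
    (/ 2 * eF x y * onu (F_V dlt F) Rf Sf x y * Q x y
     - dplus eps (fun a b => / 2 * eF a b * dminus eps W a b)%C x y
     - dminus eps (fun a b => / 2 * eF a b * dplus eps W a b)%C x y)%C = 0%C /\
    (/ 2 * eF x y * onu (F_W dlt F) Rf Sf x y * Q x y
     - dplus eps (fun a b => / 2 * eF a b * dminus eps V a b)%C x y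
     - dminus eps (fun a b => / 2 * eF a b * dplus eps V a b)%C x y)%C = 0%C.

Definition nontrivial_on (D : R -> R -> Prop) (eps dlt : C)
    (Rf Sf : R -> R -> R) : Prop :=
  forall x y, D x y ->
    (dplus eps (Vf dlt Rf Sf) x y * dplus eps (Wf dlt Rf Sf) x y *
     dminus eps (Vf dlt Rf Sf) x y * dminus eps (Wf dlt Rf Sf) x y)%C <> 0%C.

Definition nonzero_jacobian_on (D : R -> R -> Prop) (Rf Sf : R -> R -> R) : Prop :=
  forall x y, D x y -> px Rf x y * py Sf x y - py Rf x y * px Sf x y <> 0.

Definition specific_coords_on (D : R -> R -> Prop) (eps dlt : C)
    (F : R -> R -> R) (Rf Sf : R -> R -> R) : Prop :=
  forall x y, D x y ->
    (RtoC (exp (F (Rf x y) (Sf x y))) *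
       dplus eps (Vf dlt Rf Sf) x y * dplus eps (Wf dlt Rf Sf) x y)%C = 1%C /\
    (RtoC (exp (F (Rf x y) (Sf x y))) *
       dminus eps (Vf dlt Rf Sf) x y * dminus eps (Wf dlt Rf Sf) x y)%C = 1%C.

(* Main.v *)
Require Import Defs.
From Stdlib Require Import Reals.
From Coquelicot Require Import Coquelicot.
Open Scope R_scope.
From Stdlib Require Import Reals Lra FunctionalExtensionality.
From Coquelicot Require Import Coquelicot.
Open Scope R_scope.

Lemma RD_val (f : R -> R) (x l l' : R) : is_derive f x l -> l = l' -> is_derive f x l'.
Proof. intros H ->; exact H. Qed.

Lemma RD_plus (f g : R -> R) (x a b : R) : is_derive f x a -> is_derive g x b ->
  is_derive (fun t => f t + g t) x (a + b).
Proof. intros; apply (is_derive_plus f g); auto. Qed.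

Lemma RD_minus (f g : R -> R) (x a b : R) : is_derive f x a -> is_derive g x b ->
  is_derive (fun t => f t - g t) x (a - b).
Proof. intros; apply (is_derive_minus f g); auto. Qed.

Lemma RD_mult (f g : R -> R) (x a b : R) : is_derive f x a -> is_derive g x b ->
  is_derive (fun t => f t * g t) x (a * g x + f x * b).
Proof. intros; apply (is_derive_mult f g); auto. intros; apply Rmult_comm. Qed.

Lemma RD_const (c x : R) : is_derive (fun _ => c) x 0.
Proof. apply (is_derive_const c). Qed.

Lemma RD_comp (f : R -> R) (f' : R) (g : R -> R) (x b : R) : is_derive f (g x) f' -> is_derive g x b ->
  is_derive (fun t => f (g t)) x (f' * b).
Proof. intros H1 H2. eapply RD_val. apply (is_derive_comp f g); eauto.
  simpl. unfold scal; simpl. unfold mult; simpl. ring. Qed.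

Lemma RD_exp (g : R -> R) (x b : R) : is_derive g x b -> is_derive (fun t => exp (g t)) x (exp (g x) * b).
Proof. intros; apply (RD_comp exp); auto. apply is_derive_Reals, derivable_pt_lim_exp. Qed.
Lemma RD_cos (g : R -> R) (x b : R) : is_derive g x b -> is_derive (fun t => cos (g t)) x (- sin (g x) * b).
Proof. intros; apply (RD_comp cos); auto. apply is_derive_Reals, derivable_pt_lim_cos. Qed.
Lemma RD_sin (g : R -> R) (x b : R) : is_derive g x b -> is_derive (fun t => sin (g t)) x (cos (g x) * b).
Proof. intros; apply (RD_comp sin); auto. apply is_derive_Reals, derivable_pt_lim_sin. Qed.

Definition D1 (h : R -> C) (t : R) (l : C) : Prop :=
  is_derive (fun s => Re (h s)) t (Re l) /\ is_derive (fun s => Im (h s)) t (Im l).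

Lemma D1_ext f g t l : (forall s, f s = g s) -> D1 f t l -> D1 g t l.
Proof. intros E [H1 H2]; split; eapply is_derive_ext; eauto; intros; simpl; rewrite E; auto. Qed.

Lemma D1_ext_loc f g t l : locally t (fun s => f s = g s) -> D1 f t l -> D1 g t l.
Proof. intros E [H1 H2]; split; eapply is_derive_ext_loc; eauto;
  eapply filter_imp; try apply E; intros s Hs; simpl; rewrite Hs; auto. Qed.

Lemma D1_val f t l l' : D1 f t l -> l = l' -> D1 f t l'.
Proof. intros H ->; exact H. Qed.

Lemma D1_const c t : D1 (fun _ => c) t 0%C.
Proof. split; apply RD_const. Qed.

Lemma D1_RtoC (f : R -> R) (t a : R) : is_derive f t a -> D1 (fun s => RtoC (f s)) t (RtoC a).
Proof. intros H; split; simpl; auto. apply RD_const. Qed.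

Lemma D1_pair (f g : R -> R) (t a b : R) : is_derive f t a -> is_derive g t b -> D1 (fun s => (f s, g s)) t (a, b).
Proof. intros; split; simpl; auto. Qed.

Lemma D1_plus f g t a b : D1 f t a -> D1 g t b -> D1 (fun s => f s + g s)%C t (a + b)%C.
Proof. intros [H1 H2] [H3 H4]; split.
 - exact (RD_plus (fun s => Re (f s)) (fun s => Re (g s)) t _ _ H1 H3).
 - exact (RD_plus (fun s => Im (f s)) (fun s => Im (g s)) t _ _ H2 H4).
Qed.

Lemma RD_opp (f : R -> R) (x a : R) : is_derive f x a -> is_derive (fun t => - f t) x (- a).
Proof. intros; apply (is_derive_opp f); auto. Qed.

Lemma D1_opp f t a : D1 f t a -> D1 (fun s => - f s)%C t (- a)%C.
Proof. intros [H1 H2]; split.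
 - exact (RD_opp (fun s => Re (f s)) t _ H1).
 - exact (RD_opp (fun s => Im (f s)) t _ H2).
Qed.

Lemma D1_minus f g t a b : D1 f t a -> D1 g t b -> D1 (fun s => f s - g s)%C t (a - b)%C.
Proof. intros H1 H2. exact (D1_plus f (fun s => - g s)%C t a (-b)%C H1 (D1_opp g t b H2)). Qed.

Lemma D1_mult f g t a b : D1 f t a -> D1 g t b ->
  D1 (fun s => f s * g s)%C t (a * g t + f t * b)%C.
Proof. intros [H1 H2] [H3 H4]; split.
 - eapply RD_val.
   exact (RD_minus _ _ t _ _ (RD_mult (fun s => Re (f s)) (fun s => Re (g s)) t _ _ H1 H3)
                             (RD_mult (fun s => Im (f s)) (fun s => Im (g s)) t _ _ H2 H4)).
   unfold Cmult, Cplus, Re, Im; simpl; ring.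
 - eapply RD_val.
   exact (RD_plus _ _ t _ _ (RD_mult (fun s => Re (f s)) (fun s => Im (g s)) t _ _ H1 H4)
                             (RD_mult (fun s => Im (f s)) (fun s => Re (g s)) t _ _ H2 H3)).
   unfold Cmult, Cplus, Re, Im; simpl; ring.
Qed.

Lemma D1_Cexp f t a : D1 f t a -> D1 (fun s => Cexp (f s)) t (a * Cexp (f t))%C.
Proof. intros [H1 H2]. split.
 - eapply RD_val.
   + eapply is_derive_ext.
     2: exact (RD_mult _ _ t _ _ (RD_exp (fun s => Re (f s)) t _ H1) (RD_cos (fun s => Im (f s)) t _ H2)).
     intros s; unfold Cexp, Cmult, RtoC, Re; simpl; ring.
   + unfold Cexp, Cmult, RtoC, Re, Im; simpl; ring.
 - eapply RD_val.
   + eapply is_derive_ext.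
     2: exact (RD_mult _ _ t _ _ (RD_exp (fun s => Re (f s)) t _ H1) (RD_sin (fun s => Im (f s)) t _ H2)).
     intros s; unfold Cexp, Cmult, RtoC, Re, Im; simpl; ring.
   + unfold Cexp, Cmult, RtoC, Re, Im; simpl; ring.
Qed.

Definition HD (h : R -> R -> C) x y lx ly :=
  D1 (fun t => h t y) x lx /\ D1 (fun t => h x t) y ly.

Lemma HD_plus f g x y a b c d : HD f x y a b -> HD g x y c d ->
  HD (fun u v => f u v + g u v)%C x y (a + c)%C (b + d)%C.
Proof. intros [H1 H2] [H3 H4]; split; apply D1_plus; auto. Qed.
Lemma HD_minus f g x y a b c d : HD f x y a b -> HD g x y c d ->
  HD (fun u v => f u v - g u v)%C x y (a - c)%C (b - d)%C.
Proof. intros [H1 H2] [H3 H4]; split; apply D1_minus; auto. Qed.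
Lemma HD_opp f x y a b : HD f x y a b -> HD (fun u v => - f u v)%C x y (- a)%C (- b)%C.
Proof. intros [H1 H2]; split; apply D1_opp; auto. Qed.
Lemma HD_mult f g x y a b c d : HD f x y a b -> HD g x y c d ->
  HD (fun u v => f u v * g u v)%C x y (a * g x y + f x y * c)%C (b * g x y + f x y * d)%C.
Proof. intros [H1 H2] [H3 H4]; split.
  exact (D1_mult (fun t => f t y) (fun t => g t y) x a c H1 H3).
  exact (D1_mult (fun t => f x t) (fun t => g x t) y b d H2 H4). Qed.
Lemma HD_const c x y : HD (fun _ _ => c) x y 0%C 0%C.
Proof. split; apply D1_const. Qed.
Lemma HD_Cexp f x y a b : HD f x y a b ->
  HD (fun u v => Cexp (f u v)) x y (a * Cexp (f x y))%C (b * Cexp (f x y))%C.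
Proof. intros [H1 H2]; split.
  exact (D1_Cexp (fun t => f t y) x a H1).
  exact (D1_Cexp (fun t => f x t) y b H2). Qed.
Lemma HD_RtoC (f : R -> R -> R) x y a b :
  is_derive (fun t => f t y) x a -> is_derive (fun t => f x t) y b ->
  HD (fun u v => RtoC (f u v)) x y (RtoC a) (RtoC b).
Proof. intros H1 H2; split.
  exact (D1_RtoC (fun t => f t y) x a H1).
  exact (D1_RtoC (fun t => f x t) y b H2). Qed.
Lemma HD_val f x y a b a' b' : HD f x y a b -> a = a' -> b = b' -> HD f x y a' b'.
Proof. intros H -> ->; exact H. Qed.
Lemma HD_ext_loc f g x y a b : locally_2d (fun u v => f u v = g u v) x y ->
  HD f x y a b -> HD g x y a b.
Proof. intros E [H1 H2]; split.
  - eapply D1_ext_loc; [| exact H1]. apply (locally_2d_1d_const_y (fun u v => f u v = g u v)); auto.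
  - eapply D1_ext_loc; [| exact H2]. apply (locally_2d_1d_const_x (fun u v => f u v = g u v)); auto.
Qed.
Lemma HD_ext f g x y a b : (forall u v, f u v = g u v) -> HD f x y a b -> HD g x y a b.
Proof. intros E; apply HD_ext_loc. apply locally_2d_forall; auto. Qed.

Lemma pair_eq (z : C) : z = (Re z, Im z).
Proof. destruct z; reflexivity. Qed.

Lemma HD_cpx h x y a b : HD h x y a b -> cpx h x y = a /\ cpy h x y = b.
Proof. intros [[H1 H2] [H3 H4]]; unfold cpx, cpy, px, py; split.
  - rewrite (pair_eq a). f_equal; apply is_derive_unique; auto.
  - rewrite (pair_eq b). f_equal; apply is_derive_unique; auto.
Qed.

Lemma HD_unique h x y a b c d : HD h x y a b -> HD h x y c d -> a = c /\ b = d.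
Proof. intros H1 H2. destruct (HD_cpx _ _ _ _ _ H1), (HD_cpx _ _ _ _ _ H2). split; congruence. Qed.

Lemma HD_of_ex h x y :
  ex_derive (fun t => Re (h t y)) x -> ex_derive (fun t => Im (h t y)) x ->
  ex_derive (fun t => Re (h x t)) y -> ex_derive (fun t => Im (h x t)) y ->
  HD h x y (cpx h x y) (cpy h x y).
Proof. intros H1 H2 H3 H4; split; split; simpl; apply Derive_correct; auto. Qed.

Lemma dplus_HD e h x y a b : HD h x y a b -> dplus e h x y = (/ 2 * (a + / e * b))%C.
Proof. intros H; unfold dplus, dminus; destruct (HD_cpx _ _ _ _ _ H) as [-> ->]; reflexivity. Qed.
Lemma dminus_HD e h x y a b : HD h x y a b -> dminus e h x y = (/ 2 * (a - / e * b))%C.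
Proof. intros H; unfold dplus, dminus; destruct (HD_cpx _ _ _ _ _ H) as [-> ->]; reflexivity. Qed.

Lemma Ck_cont k D g x y : Ck k D g -> D x y ->
  continuous (fun p : R * R => g (fst p) (snd p)) (x, y).
Proof. destruct k; simpl; intros [H _] Hd; auto. Qed.
Lemma Ck_ex k D g x y : Ck (S k) D g -> D x y ->
  ex_derive (fun t => g t y) x /\ ex_derive (fun t => g x t) y.
Proof. simpl; intros [_ [H _]] Hd; auto. Qed.
Lemma Ck_px k D g : Ck (S k) D g -> Ck k D (px g).
Proof. simpl; tauto. Qed.
Lemma Ck_py k D g : Ck (S k) D g -> Ck k D (py g).
Proof. simpl; tauto. Qed.
Lemma sm_px D g : smooth_on D g -> smooth_on D (px g).
Proof. intros H k; apply (Ck_px k), H. Qed.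
Lemma sm_py D g : smooth_on D g -> smooth_on D (py g).
Proof. intros H k; apply (Ck_py k), H. Qed.
Lemma sm_exx D g x y : smooth_on D g -> D x y -> ex_derive (fun t => g t y) x.
Proof. intros H Hd; apply (Ck_ex 0 D g x y (H 1%nat) Hd). Qed.
Lemma sm_exy D g x y : smooth_on D g -> D x y -> ex_derive (fun t => g x t) y.
Proof. intros H Hd; apply (Ck_ex 0 D g x y (H 1%nat) Hd). Qed.
Lemma sm_cont D g x y : smooth_on D g -> D x y ->
  continuous (fun p : R * R => g (fst p) (snd p)) (x, y).
Proof. intros H Hd; apply (Ck_cont 0 D g x y (H 0%nat) Hd). Qed.
Lemma sm_dx D g x y : smooth_on D g -> D x y -> is_derive (fun t => g t y) x (px g x y).
Proof. intros; apply Derive_correct; eapply sm_exx; eauto. Qed.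
Lemma sm_dy D g x y : smooth_on D g -> D x y -> is_derive (fun t => g x t) y (py g x y).
Proof. intros; apply Derive_correct; eapply sm_exy; eauto. Qed.

Lemma open_loc D x y : open2 D -> D x y -> locally_2d (fun u v => D u v) x y.
Proof. intros H Hd. apply locally_2d_locally. apply (H (x, y)). exact Hd. Qed.

Lemma sm_diff E f r s : open2 E -> smooth_on E f -> E r s ->
  differentiable_pt_lim f r s (px f r s) (py f r s).
Proof. intros HE Hf Hr.
  apply filterdiff_differentiable_pt_lim.
  eapply filterdiff_ext_lin.
  - apply (is_derive_filterdiff f r s (px f) (py f r s)).
    + assert (L := HE (r, s) Hr). eapply filter_imp; [|exact L].
      intros [u v] Huv; simpl in *. eapply sm_dx; eauto.
    + eapply sm_dy; eauto.
    + apply (sm_cont E (px f)); auto. apply sm_px; auto.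
  - intros [u v]; simpl. reflexivity.
Qed.

Lemma chain_x (f Rf Sf : R -> R -> R) x y a b r1 s1 :
  differentiable_pt_lim f (Rf x y) (Sf x y) a b ->
  is_derive (fun t => Rf t y) x r1 -> is_derive (fun t => Sf t y) x s1 ->
  is_derive (fun t => f (Rf t y) (Sf t y)) x (a * r1 + b * s1).
Proof. intros H1 H2 H3. apply is_derive_Reals.
  apply (derivable_pt_lim_comp_2d f (fun t => Rf t y) (fun t => Sf t y)); auto;
  apply is_derive_Reals; auto. Qed.
Lemma chain_y (f Rf Sf : R -> R -> R) x y a b r1 s1 :
  differentiable_pt_lim f (Rf x y) (Sf x y) a b ->
  is_derive (fun t => Rf x t) y r1 -> is_derive (fun t => Sf x t) y s1 ->
  is_derive (fun t => f (Rf x t) (Sf x t)) y (a * r1 + b * s1).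
Proof. intros H1 H2 H3. apply is_derive_Reals.
  apply (derivable_pt_lim_comp_2d f (fun t => Rf x t) (fun t => Sf x t)); auto;
  apply is_derive_Reals; auto. Qed.

Lemma cont2d D g x y : smooth_on D g -> D x y -> continuity_2d_pt g x y.
Proof. intros H Hd. apply continuity_2d_pt_filterlim. apply (sm_cont D g x y H Hd). Qed.

Lemma sm_schwarz D f x y : open2 D -> smooth_on D f -> D x y ->
  px (py f) x y = py (px f) x y.
Proof. intros HD Hf Hd. unfold px, py.
  apply Schwarz.
  - eapply locally_2d_impl; [| apply (open_loc D x y HD Hd)].
    apply locally_2d_forall. intros u v Huv. repeat split.
    + eapply sm_exx; eauto.
    + eapply sm_exy; eauto.
    + apply (sm_exx D (py f)); auto. apply sm_py; auto.
    + apply (sm_exy D (px f)); auto. apply sm_px; auto.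
  - apply (cont2d D (px (py f))); auto. apply sm_px, sm_py; auto.
  - apply (cont2d D (py (px f))); auto. apply sm_py, sm_px; auto.
Qed.

Lemma Ceq (z w : C) : Re z = Re w -> Im z = Im w -> z = w.
Proof. destruct z, w; simpl; intros -> ->; auto. Qed.

Lemma Cexp_add a b : Cexp (a + b) = (Cexp a * Cexp b)%C.
Proof. unfold Cexp, Cplus, Cmult, RtoC, Re, Im; apply Ceq; simpl; rewrite exp_plus, cos_plus, sin_plus; ring. Qed.
Lemma Cexp_0 : Cexp 0 = 1%C.
Proof. unfold Cexp, Cmult, RtoC, Re, Im; apply Ceq; simpl; rewrite exp_0, cos_0, sin_0; ring. Qed.
Lemma C1nz : RtoC 1 <> RtoC 0.
Proof. intros H; apply (f_equal Re) in H; unfold Re, RtoC in H; simpl in H; lra. Qed.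
Lemma Cexp_nz a : Cexp a <> 0%C.
Proof. intros H. assert (H2 := Cexp_add a (- a)).
  replace (a + - a)%C with (RtoC 0) in H2 by ring. rewrite Cexp_0, H in H2.
  apply C1nz. rewrite H2; ring. Qed.
Lemma Cexp_opp a : Cexp (- a) = (/ Cexp a)%C.
Proof. assert (H2 := Cexp_add a (- a)). replace (a + - a)%C with (RtoC 0) in H2 by ring.
  rewrite Cexp_0 in H2. assert (Hn := Cexp_nz a).
  transitivity (/ Cexp a * (Cexp a * Cexp (- a)))%C. field; auto. rewrite <- H2; ring. Qed.
Lemma Cexp_sub a b : Cexp (a - b) = (Cexp a / Cexp b)%C.
Proof. unfold Cminus. rewrite Cexp_add, Cexp_opp. reflexivity. Qed.
Lemma Cexp_2 a : Cexp (2 * a) = (Cexp a * Cexp a)%C.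
Proof. replace (2 * a)%C with (a + a)%C by ring. apply Cexp_add. Qed.
Lemma Ccosh_e z : Ccosh z = ((Cexp z + / Cexp z) / 2)%C.
Proof. unfold Ccosh; rewrite Cexp_opp; auto. Qed.
Lemma Csinh_e z : Csinh z = ((Cexp z - / Cexp z) / 2)%C.
Proof. unfold Csinh; rewrite Cexp_opp; auto. Qed.

Lemma HD_V dlt (Rf Sf : R -> R -> R) D a b : smooth_on D Rf -> smooth_on D Sf -> D a b ->
  HD (Vf dlt Rf Sf) a b (RtoC (px Rf a b) + dlt * RtoC (px Sf a b))%C
                        (RtoC (py Rf a b) + dlt * RtoC (py Sf a b))%C.
Proof. intros HR HS Hab. unfold Vf. eapply HD_val.
  apply (HD_plus (fun u v => RtoC (Rf u v)) (fun u v => dlt * RtoC (Sf u v))%C).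
  apply HD_RtoC; [eapply sm_dx|eapply sm_dy]; eauto.
  apply (HD_mult (fun _ _ => dlt) (fun u v => RtoC (Sf u v))). apply HD_const.
  apply HD_RtoC; [eapply sm_dx|eapply sm_dy]; eauto.
  ring. ring. Qed.
Lemma HD_W dlt (Rf Sf : R -> R -> R) D a b : smooth_on D Rf -> smooth_on D Sf -> D a b ->
  HD (Wf dlt Rf Sf) a b (RtoC (px Rf a b) - dlt * RtoC (px Sf a b))%C
                        (RtoC (py Rf a b) - dlt * RtoC (py Sf a b))%C.
Proof. intros HR HS Hab. unfold Wf. eapply HD_val.
  apply (HD_minus (fun u v => RtoC (Rf u v)) (fun u v => dlt * RtoC (Sf u v))%C).
  apply HD_RtoC; [eapply sm_dx|eapply sm_dy]; eauto.
  apply (HD_mult (fun _ _ => dlt) (fun u v => RtoC (Sf u v))). apply HD_const.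
  apply HD_RtoC; [eapply sm_dx|eapply sm_dy]; eauto.
  ring. ring. Qed.

Definition gC (F Rf Sf : R -> R -> R) a b : C := RtoC (exp (- F (Rf a b) (Sf a b) / 2)).

Lemma closed_forms (eps dlt : C) (D : R -> R -> Prop) (F Rf Sf : R -> R -> R) (Om Th : R -> R -> C)
  (he : eps <> RtoC 0) (hd : dlt <> RtoC 0)
  (hR : smooth_on D Rf) (hS : smooth_on D Sf)
  (hRx : forall x y, D x y -> RtoC (px Rf x y) =
      (2 * RtoC (exp (- F (Rf x y) (Sf x y) / 2)) * Ccosh (Om x y) * Ccosh (Th x y))%C)
  (hRy : forall x y, D x y -> RtoC (py Rf x y) =
      (2 * eps * RtoC (exp (- F (Rf x y) (Sf x y) / 2)) * Csinh (Om x y) * Csinh (Th x y))%C)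
  (hSx : forall x y, D x y -> RtoC (px Sf x y) =
      (2 / dlt * RtoC (exp (- F (Rf x y) (Sf x y) / 2)) * Ccosh (Om x y) * Csinh (Th x y))%C)
  (hSy : forall x y, D x y -> RtoC (py Sf x y) =
      (2 * eps / dlt * RtoC (exp (- F (Rf x y) (Sf x y) / 2)) * Csinh (Om x y) * Ccosh (Th x y))%C)
  a b : D a b ->
  dplus eps (Vf dlt Rf Sf) a b = (gC F Rf Sf a b * Cexp (Om a b + Th a b))%C /\
  dminus eps (Vf dlt Rf Sf) a b = (gC F Rf Sf a b * Cexp (Th a b - Om a b))%C /\
  dplus eps (Wf dlt Rf Sf) a b = (gC F Rf Sf a b * Cexp (- (Om a b + Th a b)))%C /\
  dminus eps (Wf dlt Rf Sf) a b = (gC F Rf Sf a b * Cexp (Om a b - Th a b))%C.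
Proof. intros Hab.
  rewrite (dplus_HD _ _ _ _ _ _ (HD_V dlt Rf Sf D a b hR hS Hab)).
  rewrite (dminus_HD _ _ _ _ _ _ (HD_V dlt Rf Sf D a b hR hS Hab)).
  rewrite (dplus_HD _ _ _ _ _ _ (HD_W dlt Rf Sf D a b hR hS Hab)).
  rewrite (dminus_HD _ _ _ _ _ _ (HD_W dlt Rf Sf D a b hR hS Hab)).
  rewrite (hRx a b Hab), (hRy a b Hab), (hSx a b Hab), (hSy a b Hab).
  rewrite !Ccosh_e, !Csinh_e, Cexp_opp, Cexp_add, Cexp_sub, Cexp_sub. unfold gC.
  assert (HP := Cexp_nz (Om a b)). assert (HT := Cexp_nz (Th a b)).
  set (P := Cexp (Om a b)) in *. set (T := Cexp (Th a b)) in *.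
  set (g := RtoC (exp (- F (Rf a b) (Sf a b) / 2))).
  repeat split; field; auto.
Qed.

Lemma cpx_lift F r s : cpx (lift F) r s = RtoC (px F r s).
Proof. unfold cpx, lift, RtoC. f_equal. unfold px; simpl. apply Derive_const. Qed.
Lemma cpy_lift F r s : cpy (lift F) r s = RtoC (py F r s).
Proof. unfold cpy, lift, RtoC. f_equal. unfold py; simpl. apply Derive_const. Qed.

Lemma FV_eq dlt F : F_V dlt F = fun r s => (/ 2 * (RtoC (px F r s) + / dlt * RtoC (py F r s)))%C.
Proof. apply functional_extensionality; intro r; apply functional_extensionality; intro s.
  unfold F_V, dplus. rewrite cpx_lift, cpy_lift. reflexivity. Qed.
Lemma FW_eq dlt F : F_W dlt F = fun r s => (/ 2 * (RtoC (px F r s) - / dlt * RtoC (py F r s)))%C.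
Proof. apply functional_extensionality; intro r; apply functional_extensionality; intro s.
  unfold F_W, dminus. rewrite cpx_lift, cpy_lift. reflexivity. Qed.

Lemma HD_linp (c1 c2 : C) (f1 f2 : R -> R -> R) (r s a1 b1 a2 b2 : R) :
  is_derive (fun t => f1 t s) r a1 -> is_derive (fun t => f1 r t) s b1 ->
  is_derive (fun t => f2 t s) r a2 -> is_derive (fun t => f2 r t) s b2 ->
  HD (fun u v => c1 * (RtoC (f1 u v) + c2 * RtoC (f2 u v)))%C r s
     (c1 * (RtoC a1 + c2 * RtoC a2))%C (c1 * (RtoC b1 + c2 * RtoC b2))%C.
Proof. intros H H0 H1 H2.
  refine (HD_val _ _ _ _ _ _ _ (HD_mult _ _ _ _ _ _ _ _ (HD_const c1 r s)
     (HD_plus _ _ _ _ _ _ _ _ (HD_RtoC f1 r s a1 b1 H H0)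
        (HD_mult _ _ _ _ _ _ _ _ (HD_const c2 r s) (HD_RtoC f2 r s a2 b2 H1 H2)))) _ _);
  ring. Qed.
Lemma HD_linm (c1 c2 : C) (f1 f2 : R -> R -> R) (r s a1 b1 a2 b2 : R) :
  is_derive (fun t => f1 t s) r a1 -> is_derive (fun t => f1 r t) s b1 ->
  is_derive (fun t => f2 t s) r a2 -> is_derive (fun t => f2 r t) s b2 ->
  HD (fun u v => c1 * (RtoC (f1 u v) - c2 * RtoC (f2 u v)))%C r s
     (c1 * (RtoC a1 - c2 * RtoC a2))%C (c1 * (RtoC b1 - c2 * RtoC b2))%C.
Proof. intros H H0 H1 H2.
  refine (HD_val _ _ _ _ _ _ _ (HD_mult _ _ _ _ _ _ _ _ (HD_const c1 r s)
     (HD_minus _ _ _ _ _ _ _ _ (HD_RtoC f1 r s a1 b1 H H0)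
        (HD_mult _ _ _ _ _ _ _ _ (HD_const c2 r s) (HD_RtoC f2 r s a2 b2 H1 H2)))) _ _);
  ring. Qed.

Lemma comp_dx (E D : R -> R -> Prop) (f Rf Sf : R -> R -> R) x y :
  open2 E -> smooth_on E f -> smooth_on D Rf -> smooth_on D Sf -> D x y -> E (Rf x y) (Sf x y) ->
  is_derive (fun t => f (Rf t y) (Sf t y)) x
    (px f (Rf x y) (Sf x y) * px Rf x y + py f (Rf x y) (Sf x y) * px Sf x y).
Proof. intros. apply chain_x. apply (sm_diff E); assumption. apply (sm_dx D); assumption. apply (sm_dx D); assumption. Qed.
Lemma comp_dy (E D : R -> R -> Prop) (f Rf Sf : R -> R -> R) x y :
  open2 E -> smooth_on E f -> smooth_on D Rf -> smooth_on D Sf -> D x y -> E (Rf x y) (Sf x y) ->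
  is_derive (fun t => f (Rf x t) (Sf x t)) y
    (px f (Rf x y) (Sf x y) * py Rf x y + py f (Rf x y) (Sf x y) * py Sf x y).
Proof. intros. apply chain_y. apply (sm_diff E); assumption. apply (sm_dy D); assumption. apply (sm_dy D); assumption. Qed.

Lemma RD_nh (f : R -> R) x a : is_derive f x a -> is_derive (fun t => - f t / 2) x (- a / 2).
Proof. intros H. eapply RD_val. eapply is_derive_ext.
  2: exact (RD_mult _ _ x _ _ (RD_opp f x a H) (RD_const (/ 2) x)).
  intros; simpl; unfold Rdiv; ring. unfold Rdiv; ring. Qed.

Lemma two_nz : (2 : R) <> 0.
Proof. lra. Qed.

Lemma exp_rel z : RtoC (exp z) = (/ (RtoC (exp (- z / 2)) * RtoC (exp (- z / 2))))%C.
Proof. rewrite <- RtoC_mult, <- exp_plus. rewrite <- RtoC_inv.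
  f_equal. replace (- z / 2 + - z / 2) with (- z) by field. rewrite exp_Ropp. field.
  apply Rgt_not_eq, exp_pos. apply Rgt_not_eq, exp_pos. Qed.
Lemma exp_rel2 z : RtoC (exp (- z)) = (RtoC (exp (- z / 2)) * RtoC (exp (- z / 2)))%C.
Proof. rewrite <- RtoC_mult, <- exp_plus. f_equal. f_equal. field. Qed.
Lemma gnz z : RtoC (exp z) <> RtoC 0.
Proof. intros H; apply RtoC_inj in H. pose proof (exp_pos z); lra. Qed.

Lemma HD_cs D h a b : csmooth_on D h -> D a b -> HD h a b (cpx h a b) (cpy h a b).
Proof. intros [H1 H2] Hab. apply HD_of_ex.
  apply (sm_exx D (fun a b => Re (h a b))); assumption.
  apply (sm_exx D (fun a b => Im (h a b))); assumption.
  apply (sm_exy D (fun a b => Re (h a b))); assumption.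
  apply (sm_exy D (fun a b => Im (h a b))); assumption.
Qed.

Lemma HD_eFgK (E D : R -> R -> Prop) (F Rf Sf : R -> R -> R) (K : R -> R -> C) x y kx ky :
 open2 E -> smooth_on E F -> smooth_on D Rf -> smooth_on D Sf -> D x y -> E (Rf x y) (Sf x y) ->
 HD K x y kx ky ->
 HD (fun a b => / 2 * RtoC (exp (F (Rf a b) (Sf a b))) * (gC F Rf Sf a b * Cexp (K a b)))%C x y
   (/ 2 * RtoC (exp (F (Rf x y) (Sf x y))) * (gC F Rf Sf x y * Cexp (K x y)) *
     (/ 2 * (RtoC (px F (Rf x y) (Sf x y)) * RtoC (px Rf x y) + RtoC (py F (Rf x y) (Sf x y)) * RtoC (px Sf x y)) + kx))%C
   (/ 2 * RtoC (exp (F (Rf x y) (Sf x y))) * (gC F Rf Sf x y * Cexp (K x y)) *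
     (/ 2 * (RtoC (px F (Rf x y) (Sf x y)) * RtoC (py Rf x y) + RtoC (py F (Rf x y) (Sf x y)) * RtoC (py Sf x y)) + ky))%C.
Proof. intros HE HF HR HS Hxy Hu HK.
  pose proof (comp_dx E D F Rf Sf x y HE HF HR HS Hxy Hu) as hx.
  pose proof (comp_dy E D F Rf Sf x y HE HF HR HS Hxy Hu) as hy.
  pose proof (HD_RtoC (fun a b => exp (F (Rf a b) (Sf a b))) x y _ _
     (RD_exp _ _ _ hx) (RD_exp _ _ _ hy)) as HEx.
  pose proof (HD_RtoC (fun a b => exp (- F (Rf a b) (Sf a b) / 2)) x y _ _
     (RD_exp _ _ _ (RD_nh _ _ _ hx)) (RD_exp _ _ _ (RD_nh _ _ _ hy))) as HG.
  refine (HD_val _ _ _ _ _ _ _ (HD_mult _ _ _ _ _ _ _ _ (HD_mult _ _ _ _ _ _ _ _ (HD_const (/ 2) x y) HEx)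
     (HD_mult _ _ _ _ _ _ _ _ HG (HD_Cexp _ _ _ _ _ HK))) _ _).
  all: unfold gC; cbv beta.
  all: repeat first [rewrite RtoC_mult | rewrite RtoC_plus | rewrite RtoC_opp | rewrite (RtoC_div _ 2 two_nz)].
  all: field.
Qed.

Ltac pushR := repeat first [rewrite RtoC_mult | rewrite RtoC_plus | rewrite RtoC_minus | rewrite RtoC_opp | rewrite (RtoC_div _ 2 two_nz)].

Lemma loc_eq (D : R -> R -> Prop) (f g : R -> R -> C) a b : open2 D -> D a b ->
  (forall u v, D u v -> f u v = g u v) -> locally_2d (fun u v => f u v = g u v) a b.
Proof. intros HD Hab H. eapply locally_2d_impl; [| apply (open_loc D a b HD Hab)].
  apply locally_2d_forall; auto. Qed.

Lemma P4nz (P : C) : P <> RtoC 0 -> (P * P - / (P * P))%C <> RtoC 0 -> (P * P * (P * P) - RtoC 1)%C <> RtoC 0.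
Proof. intros H1 H2 Hz; apply H2. transitivity (/ (P * P) * (P * P * (P * P) - RtoC 1))%C.
  field; auto. rewrite Hz; ring. Qed.

Lemma solve2 (L1 L2 z w k1 k2 : C) : L1 = RtoC 0 -> L2 = RtoC 0 -> (z - w = k1 * L1 + k2 * L2)%C -> z = w.
Proof. intros -> -> H. rewrite Cmult_0_r, Cmult_0_r, Cplus_0_l in H.
  apply Ceq_minus in H. exact H. Qed.

Definition XA dlt (F Rf Sf : R -> R -> R) (Om Th : R -> R -> C) a b : C :=
  (/ 2 * gC F Rf Sf a b * (onu (F_W dlt F) Rf Sf a b * Cexp (Om a b - Th a b)
     - onu (F_V dlt F) Rf Sf a b * Cexp (Th a b - Om a b)))%C.
Definition XB dlt (F Rf Sf : R -> R -> R) (Om Th : R -> R -> C) a b : C :=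
  (/ 2 * gC F Rf Sf a b * (onu (F_W dlt F) Rf Sf a b * Cexp (- (Om a b + Th a b))
     - onu (F_V dlt F) Rf Sf a b * Cexp (Om a b + Th a b)))%C.

Lemma first_order (eps dlt : C) (D E : R -> R -> Prop) (F Rf Sf : R -> R -> R) (Om Th : R -> R -> C)
  (he : eps <> RtoC 0) (hd : dlt <> RtoC 0) (hD : open2 D) (hE : open2 E) (hF : smooth_on E F)
  (hR : smooth_on D Rf) (hS : smooth_on D Sf) (hDE : forall x y, D x y -> E (Rf x y) (Sf x y))
  (hharm : harmonic_on D eps dlt F Rf Sf) (hjac : nonzero_jacobian_on D Rf Sf)
  (hOm : csmooth_on D Om) (hTh : csmooth_on D Th)
  (hRx : forall x y, D x y -> RtoC (px Rf x y) =
      (2 * RtoC (exp (- F (Rf x y) (Sf x y) / 2)) * Ccosh (Om x y) * Ccosh (Th x y))%C)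
  (hRy : forall x y, D x y -> RtoC (py Rf x y) =
      (2 * eps * RtoC (exp (- F (Rf x y) (Sf x y) / 2)) * Csinh (Om x y) * Csinh (Th x y))%C)
  (hSx : forall x y, D x y -> RtoC (px Sf x y) =
      (2 / dlt * RtoC (exp (- F (Rf x y) (Sf x y) / 2)) * Ccosh (Om x y) * Csinh (Th x y))%C)
  (hSy : forall x y, D x y -> RtoC (py Sf x y) =
      (2 * eps / dlt * RtoC (exp (- F (Rf x y) (Sf x y) / 2)) * Csinh (Om x y) * Ccosh (Th x y))%C)
  a b (Hab : D a b) :
  (dminus eps Om a b + dminus eps Th a b = XA dlt F Rf Sf Om Th a b)%C /\
  (dplus eps Th a b - dplus eps Om a b = XB dlt F Rf Sf Om Th a b)%C.
Proof.
  destruct (hharm a b Hab) as [H1 H2]. cbv beta zeta in H1, H2.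
  pose proof (closed_forms eps dlt D F Rf Sf Om Th he hd hR hS hRx hRy hSx hSy) as CF.
  destruct (CF a b Hab) as (C1 & C2 & C3 & C4).
  rewrite C1, C2, C3, C4 in H1, H2.
  pose proof (HD_cs D Om a b hOm Hab) as HOm.
  pose proof (HD_cs D Th a b hTh Hab) as HTh.
  pose proof (hDE a b Hab) as Hu.
  pose proof (HD_eFgK E D F Rf Sf (fun u v => Om u v - Th u v)%C a b _ _ hE hF hR hS Hab Hu
     (HD_minus _ _ _ _ _ _ _ _ HOm HTh)) as K1.
  lazymatch type of H1 with context [dplus eps ?h a b] =>
    assert (L1 : forall u v, D u v -> (/ 2 * RtoC (exp (F (Rf u v) (Sf u v))) *
       (gC F Rf Sf u v * Cexp ((fun u v => Om u v - Th u v)%C u v)))%C = h u v)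
      by (intros u v Huv; cbv beta; rewrite (proj2 (proj2 (proj2 (CF u v Huv)))); reflexivity);
    rewrite (dplus_HD eps h a b _ _ (HD_ext_loc _ h a b _ _ (loc_eq D _ h a b hD Hab L1) K1)) in H1
  end.
  pose proof (HD_eFgK E D F Rf Sf (fun u v => - (Om u v + Th u v))%C a b _ _ hE hF hR hS Hab Hu
     (HD_opp _ _ _ _ _ (HD_plus _ _ _ _ _ _ _ _ HOm HTh))) as K2.
  lazymatch type of H1 with context [dminus eps ?h a b] =>
    assert (L2 : forall u v, D u v -> (/ 2 * RtoC (exp (F (Rf u v) (Sf u v))) *
       (gC F Rf Sf u v * Cexp ((fun u v => - (Om u v + Th u v))%C u v)))%C = h u v)
      by (intros u v Huv; cbv beta; rewrite (proj1 (proj2 (proj2 (CF u v Huv)))); reflexivity);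
    rewrite (dminus_HD eps h a b _ _ (HD_ext_loc _ h a b _ _ (loc_eq D _ h a b hD Hab L2) K2)) in H1
  end.
  pose proof (HD_eFgK E D F Rf Sf (fun u v => Th u v - Om u v)%C a b _ _ hE hF hR hS Hab Hu
     (HD_minus _ _ _ _ _ _ _ _ HTh HOm)) as K3.
  lazymatch type of H2 with context [dplus eps ?h a b] =>
    assert (L3 : forall u v, D u v -> (/ 2 * RtoC (exp (F (Rf u v) (Sf u v))) *
       (gC F Rf Sf u v * Cexp ((fun u v => Th u v - Om u v)%C u v)))%C = h u v)
      by (intros u v Huv; cbv beta; rewrite (proj1 (proj2 (CF u v Huv))); reflexivity);
    rewrite (dplus_HD eps h a b _ _ (HD_ext_loc _ h a b _ _ (loc_eq D _ h a b hD Hab L3) K3)) in H2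
  end.
  pose proof (HD_eFgK E D F Rf Sf (fun u v => Om u v + Th u v)%C a b _ _ hE hF hR hS Hab Hu
     (HD_plus _ _ _ _ _ _ _ _ HOm HTh)) as K4.
  lazymatch type of H2 with context [dminus eps ?h a b] =>
    assert (L4 : forall u v, D u v -> (/ 2 * RtoC (exp (F (Rf u v) (Sf u v))) *
       (gC F Rf Sf u v * Cexp ((fun u v => Om u v + Th u v)%C u v)))%C = h u v)
      by (intros u v Huv; cbv beta; rewrite (proj1 (CF u v Huv)); reflexivity);
    rewrite (dminus_HD eps h a b _ _ (HD_ext_loc _ h a b _ _ (loc_eq D _ h a b hD Hab L4) K4)) in H2
  end.
  cbv beta in H1, H2. clear K1 K2 K3 K4 L1 L2 L3 L4.
  pose proof (hjac a b Hab) as J.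
  assert (J' : (RtoC (px Rf a b) * RtoC (py Sf a b) - RtoC (py Rf a b) * RtoC (px Sf a b))%C <> RtoC 0).
  { intro Hz; apply J. apply RtoC_inj. rewrite RtoC_minus, !RtoC_mult. exact Hz. }
  clear J.
  rewrite (hRx a b Hab), (hRy a b Hab), (hSx a b Hab), (hSy a b Hab) in H1, H2, J'.
  rewrite (exp_rel (F (Rf a b) (Sf a b))) in H1, H2.
  unfold XA, XB. rewrite FV_eq, FW_eq in *. unfold onu, gC in *. cbv beta in *.
  rewrite !Ccosh_e, !Csinh_e in H1, H2, J'.
  rewrite !Cexp_opp, !Cexp_add, !Cexp_sub in *.
  unfold dplus, dminus.
  assert (HP := Cexp_nz (Om a b)). assert (HT := Cexp_nz (Th a b)).
  assert (Hg := gnz (- F (Rf a b) (Sf a b) / 2)).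
  set (P := Cexp (Om a b)) in *. set (T := Cexp (Th a b)) in *.
  set (g := RtoC (exp (- F (Rf a b) (Sf a b) / 2))) in *.
  set (F1 := RtoC (px F (Rf a b) (Sf a b))) in *.
  set (F2 := RtoC (py F (Rf a b) (Sf a b))) in *.
  set (ox := cpx Om a b) in *. set (oy := cpy Om a b) in *.
  set (tx := cpx Th a b) in *. set (ty := cpy Th a b) in *.
  assert (HPP : (P * P - / (P * P))%C <> RtoC 0).
  { intro Hz; apply J'. transitivity (eps / dlt * (g * g) * (P * P - / (P * P)))%C.
    field; auto. rewrite Hz; ring. }
  split.
  - apply (solve2 _ _ _ _ (- (2 * g * (T / P)) / (P * P - / (P * P)))%C (- (2 * g * (P / T)) / (P * P - / (P * P)))%C H1 H2).
    field. cbv beta. repeat split; auto. apply P4nz; auto.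
  - apply (solve2 _ _ _ _ (2 * g * (P * T) / (P * P - / (P * P)))%C (2 * g / (P * T) / (P * P - / (P * P)))%C H1 H2).
    field. cbv beta. repeat split; auto. apply P4nz; auto.
Qed.

Ltac pushR_in H := repeat first [rewrite RtoC_mult in H | rewrite RtoC_plus in H | rewrite RtoC_minus in H | rewrite RtoC_opp in H | rewrite (RtoC_div _ 2 two_nz) in H].

Lemma jacP (eps dlt : C) (D : R -> R -> Prop) (F Rf Sf : R -> R -> R) (Om Th : R -> R -> C)
  (he : eps <> RtoC 0) (hd : dlt <> RtoC 0) (hjac : nonzero_jacobian_on D Rf Sf)
  (hRx : forall x y, D x y -> RtoC (px Rf x y) =
      (2 * RtoC (exp (- F (Rf x y) (Sf x y) / 2)) * Ccosh (Om x y) * Ccosh (Th x y))%C)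
  (hRy : forall x y, D x y -> RtoC (py Rf x y) =
      (2 * eps * RtoC (exp (- F (Rf x y) (Sf x y) / 2)) * Csinh (Om x y) * Csinh (Th x y))%C)
  (hSx : forall x y, D x y -> RtoC (px Sf x y) =
      (2 / dlt * RtoC (exp (- F (Rf x y) (Sf x y) / 2)) * Ccosh (Om x y) * Csinh (Th x y))%C)
  (hSy : forall x y, D x y -> RtoC (py Sf x y) =
      (2 * eps / dlt * RtoC (exp (- F (Rf x y) (Sf x y) / 2)) * Csinh (Om x y) * Ccosh (Th x y))%C)
  a b (Hab : D a b) :
  (Cexp (Om a b) * Cexp (Om a b) - / (Cexp (Om a b) * Cexp (Om a b)))%C <> RtoC 0.
Proof.
  pose proof (hjac a b Hab) as J.
  assert (J' : (RtoC (px Rf a b) * RtoC (py Sf a b) - RtoC (py Rf a b) * RtoC (px Sf a b))%C <> RtoC 0).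
  { intro Hz; apply J. apply RtoC_inj. rewrite RtoC_minus, !RtoC_mult. exact Hz. }
  clear J.
  rewrite (hRx a b Hab), (hRy a b Hab), (hSx a b Hab), (hSy a b Hab) in J'.
  rewrite !Ccosh_e, !Csinh_e in J'.
  assert (HP := Cexp_nz (Om a b)). assert (HT := Cexp_nz (Th a b)).
  assert (Hg := gnz (- F (Rf a b) (Sf a b) / 2)).
  set (P := Cexp (Om a b)) in *. set (T := Cexp (Th a b)) in *.
  set (g := RtoC (exp (- F (Rf a b) (Sf a b) / 2))) in *.
  intro Hz; apply J'. transitivity (eps / dlt * (g * g) * (P * P - / (P * P)))%C.
  field; auto. rewrite Hz; ring.
Qed.

Lemma Pm1 (P : C) : P <> RtoC 0 -> (P * P - / (P * P))%C <> RtoC 0 -> (P * P - RtoC 1)%C <> RtoC 0.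
Proof. intros H1 H2 Hz; apply H2. transitivity ((P * P + RtoC 1) * (P * P - RtoC 1) / (P * P))%C.
  field; auto. rewrite Hz; field; auto. Qed.
Lemma Pp1 (P : C) : P <> RtoC 0 -> (P * P - / (P * P))%C <> RtoC 0 -> (P * P + RtoC 1)%C <> RtoC 0.
Proof. intros H1 H2 Hz; apply H2. transitivity ((P * P + RtoC 1) * (P * P - RtoC 1) / (P * P))%C.
  field; auto. rewrite Hz; field; auto. Qed.

Lemma cs_cpx D h : csmooth_on D h -> csmooth_on D (cpx h).
Proof. intros [H1 H2]; split; [exact (sm_px D _ H1) | exact (sm_px D _ H2)]. Qed.
Lemma cs_cpy D h : csmooth_on D h -> csmooth_on D (cpy h).
Proof. intros [H1 H2]; split; [exact (sm_py D _ H1) | exact (sm_py D _ H2)]. Qed.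
Lemma cs_schwarz D h x y : open2 D -> csmooth_on D h -> D x y -> cpx (cpy h) x y = cpy (cpx h) x y.
Proof. intros HD [H1 H2] Hxy. unfold cpx, cpy. f_equal.
  exact (sm_schwarz D _ x y HD H1 Hxy). exact (sm_schwarz D _ x y HD H2 Hxy). Qed.

Lemma lin2 (L1 R1 L2 R2 z w k1 k2 : C) : L1 = R1 -> L2 = R2 ->
  (z - w = k1 * (L1 - R1) + k2 * (L2 - R2))%C -> z = w.
Proof. intros -> -> H. apply Ceq_minus. rewrite H; ring. Qed.
Lemma lin4 (L1 R1 L2 R2 L3 R3 L4 R4 z w k1 k2 k3 k4 : C) : L1 = R1 -> L2 = R2 -> L3 = R3 -> L4 = R4 ->
  (z - w = k1 * (L1 - R1) + k2 * (L2 - R2) + k3 * (L3 - R3) + k4 * (L4 - R4))%C -> z = w.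
Proof. intros -> -> -> -> H. apply Ceq_minus. rewrite H; ring. Qed.

Lemma eps_nz (eps : C) : eps = RtoC 1 \/ eps = Ci -> eps <> RtoC 0.
Proof. intros [-> | ->]. exact C1nz. exact Ci_nz. Qed.

Theorem proposition4p1
  (eps dlt : C) (heps : eps = RtoC 1 \/ eps = Ci) (hdlt : dlt = RtoC 1 \/ dlt = Ci)
  (D : R -> R -> Prop) (hD : open2 D)
  (E : R -> R -> Prop) (hE : open2 E)
  (F : R -> R -> R) (hF : smooth_on E F)
  (Rf Sf : R -> R -> R) (hR : smooth_on D Rf) (hS : smooth_on D Sf)
  (hDE : forall x y, D x y -> E (Rf x y) (Sf x y))
  (hharm : harmonic_on D eps dlt F Rf Sf)
  (hnontriv : nontrivial_on D eps dlt Rf Sf)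
  (hjac : nonzero_jacobian_on D Rf Sf)
  (hspec : specific_coords_on D eps dlt F Rf Sf)
  (Om Th : R -> R -> C) (hOm : csmooth_on D Om) (hTh : csmooth_on D Th)
  (hRx : forall x y, D x y -> RtoC (px Rf x y) =
      (2 * RtoC (exp (- F (Rf x y) (Sf x y) / 2)) * Ccosh (Om x y) * Ccosh (Th x y))%C)
  (hRy : forall x y, D x y -> RtoC (py Rf x y) =
      (2 * eps * RtoC (exp (- F (Rf x y) (Sf x y) / 2)) * Csinh (Om x y) * Csinh (Th x y))%C)
  (hSx : forall x y, D x y -> RtoC (px Sf x y) =
      (2 / dlt * RtoC (exp (- F (Rf x y) (Sf x y) / 2)) * Ccosh (Om x y) * Csinh (Th x y))%C)
  (hSy : forall x y, D x y -> RtoC (py Sf x y) =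
      (2 * eps / dlt * RtoC (exp (- F (Rf x y) (Sf x y) / 2)) * Csinh (Om x y) * Ccosh (Th x y))%C) :
  let Fx := fun x y => px F (Rf x y) (Sf x y) * px Rf x y + py F (Rf x y) (Sf x y) * px Sf x y in
  let Fy := fun x y => px F (Rf x y) (Sf x y) * py Rf x y + py F (Rf x y) (Sf x y) * py Sf x y in
  forall x y, D x y ->
    (2 * dplus eps (dminus eps Th) x y =
       RtoC (exp (- F (Rf x y) (Sf x y))) *
       ((onu (F_V dlt F) Rf Sf x y ^ 2 - onu (F_VV dlt F) Rf Sf x y) * Cexp (2 * Th x y)
        - (onu (F_W dlt F) Rf Sf x y ^ 2 - onu (F_WW dlt F) Rf Sf x y) * Cexp (- (2 * Th x y))))%C /\
    (dplus eps (dminus eps Om) x y =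
       - (onu (K_N dlt F) Rf Sf x y / 2) * Csinh (2 * Om x y))%C /\
    (cpx Om x y - / eps * cpy Th x y = / 2 * RtoC (Fx x y) * Ctanh (Om x y))%C /\
    (cpy Om x y - eps * cpx Th x y = / 2 * RtoC (Fy x y) * Ccoth (Om x y))%C.
Proof.
  cbv zeta. intros x y Hxy.
  pose proof (eps_nz eps heps) as he. pose proof (eps_nz dlt hdlt) as hd.
  pose proof (first_order eps dlt D E F Rf Sf Om Th he hd hD hE hF hR hS hDE hharm hjac hOm hTh
     hRx hRy hSx hSy) as FO.
  pose proof (hDE x y Hxy) as Hu.
  pose proof (HD_cs D Om x y hOm Hxy) as HOm.
  pose proof (HD_cs D Th x y hTh Hxy) as HTh.
  pose proof (HD_cs D _ x y (cs_cpx D Om hOm) Hxy) as HOmx.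
  pose proof (HD_cs D _ x y (cs_cpy D Om hOm) Hxy) as HOmy.
  pose proof (HD_cs D _ x y (cs_cpx D Th hTh) Hxy) as HThx.
  pose proof (HD_cs D _ x y (cs_cpy D Th hTh) Hxy) as HThy.
  pose proof (comp_dx E D F Rf Sf x y hE hF hR hS Hxy Hu) as hx.
  pose proof (comp_dy E D F Rf Sf x y hE hF hR hS Hxy Hu) as hy.
  pose proof (HD_RtoC (fun a b => exp (- F (Rf a b) (Sf a b) / 2)) x y _ _
     (RD_exp _ _ _ (RD_nh _ _ _ hx)) (RD_exp _ _ _ (RD_nh _ _ _ hy))) as HG.
  pose proof (sm_px E F hF) as hF1. pose proof (sm_py E F hF) as hF2.
  pose proof (HD_linm (/ 2) (/ dlt) (fun a b => px F (Rf a b) (Sf a b)) (fun a b => py F (Rf a b) (Sf a b)) x y _ _ _ _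
     (comp_dx E D (px F) Rf Sf x y hE hF1 hR hS Hxy Hu) (comp_dy E D (px F) Rf Sf x y hE hF1 hR hS Hxy Hu)
     (comp_dx E D (py F) Rf Sf x y hE hF2 hR hS Hxy Hu) (comp_dy E D (py F) Rf Sf x y hE hF2 hR hS Hxy Hu)) as HFW.
  pose proof (HD_linp (/ 2) (/ dlt) (fun a b => px F (Rf a b) (Sf a b)) (fun a b => py F (Rf a b) (Sf a b)) x y _ _ _ _
     (comp_dx E D (px F) Rf Sf x y hE hF1 hR hS Hxy Hu) (comp_dy E D (px F) Rf Sf x y hE hF1 hR hS Hxy Hu)
     (comp_dx E D (py F) Rf Sf x y hE hF2 hR hS Hxy Hu) (comp_dy E D (py F) Rf Sf x y hE hF2 hR hS Hxy Hu)) as HFV.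
  pose proof (HD_mult _ _ _ _ _ _ _ _ (HD_mult _ _ _ _ _ _ _ _ (HD_const (/ 2) x y) HG)
     (HD_minus _ _ _ _ _ _ _ _
        (HD_mult _ _ _ _ _ _ _ _ HFW (HD_Cexp _ _ _ _ _ (HD_minus _ _ _ _ _ _ _ _ HOm HTh)))
        (HD_mult _ _ _ _ _ _ _ _ HFV (HD_Cexp _ _ _ _ _ (HD_minus _ _ _ _ _ _ _ _ HTh HOm))))) as KXA.
  pose proof (HD_mult _ _ _ _ _ _ _ _ (HD_mult _ _ _ _ _ _ _ _ (HD_const (/ 2) x y) HG)
     (HD_minus _ _ _ _ _ _ _ _
        (HD_mult _ _ _ _ _ _ _ _ HFW (HD_Cexp _ _ _ _ _ (HD_opp _ _ _ _ _ (HD_plus _ _ _ _ _ _ _ _ HOm HTh))))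
        (HD_mult _ _ _ _ _ _ _ _ HFV (HD_Cexp _ _ _ _ _ (HD_plus _ _ _ _ _ _ _ _ HOm HTh))))) as KXB.
  pose proof (HD_plus _ _ _ _ _ _ _ _
     (HD_mult _ _ _ _ _ _ _ _ (HD_const (/ 2) x y) (HD_minus _ _ _ _ _ _ _ _ HOmx (HD_mult _ _ _ _ _ _ _ _ (HD_const (/ eps) x y) HOmy)))
     (HD_mult _ _ _ _ _ _ _ _ (HD_const (/ 2) x y) (HD_minus _ _ _ _ _ _ _ _ HThx (HD_mult _ _ _ _ _ _ _ _ (HD_const (/ eps) x y) HThy)))) as KLA.
  pose proof (HD_minus _ _ _ _ _ _ _ _
     (HD_mult _ _ _ _ _ _ _ _ (HD_const (/ 2) x y) (HD_plus _ _ _ _ _ _ _ _ HThx (HD_mult _ _ _ _ _ _ _ _ (HD_const (/ eps) x y) HThy)))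
     (HD_mult _ _ _ _ _ _ _ _ (HD_const (/ 2) x y) (HD_plus _ _ _ _ _ _ _ _ HOmx (HD_mult _ _ _ _ _ _ _ _ (HD_const (/ eps) x y) HOmy)))) as KLB.
  pose proof (fun L => HD_unique _ x y _ _ _ _ KLA (HD_ext_loc _ _ x y _ _ (loc_eq D _ _ x y hD Hxy L) KXA)) as EA.
  specialize (EA ltac:(intros u v Huv; destruct (FO u v Huv) as [A _]; unfold XA, gC, onu in A;
     rewrite FV_eq, FW_eq in A; symmetry; exact A)).
  pose proof (fun L => HD_unique _ x y _ _ _ _ KLB (HD_ext_loc _ _ x y _ _ (loc_eq D _ _ x y hD Hxy L) KXB)) as EB.
  specialize (EB ltac:(intros u v Huv; destruct (FO u v Huv) as [_ A]; unfold XB, gC, onu in A;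
     rewrite FV_eq, FW_eq in A; symmetry; exact A)).
  destruct EA as [EAx EAy]. destruct EB as [EBx EBy].
  clear KXA KXB KLA KLB HFW HFV HG.
  pose proof (HD_linp (/ 2) (/ dlt) (px F) (py F) (Rf x y) (Sf x y) _ _ _ _
     (sm_dx E (px F) _ _ hF1 Hu) (sm_dy E (px F) _ _ hF1 Hu)
     (sm_dx E (py F) _ _ hF2 Hu) (sm_dy E (py F) _ _ hF2 Hu)) as HNV.
  pose proof (HD_linm (/ 2) (/ dlt) (px F) (py F) (Rf x y) (Sf x y) _ _ _ _
     (sm_dx E (px F) _ _ hF1 Hu) (sm_dy E (px F) _ _ hF1 Hu)
     (sm_dx E (py F) _ _ hF2 Hu) (sm_dy E (py F) _ _ hF2 Hu)) as HNW.
  assert (EVV : onu (F_VV dlt F) Rf Sf x y = dplus dlt (F_V dlt F) (Rf x y) (Sf x y)) by reflexivity.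
  assert (EWW : onu (F_WW dlt F) Rf Sf x y = dminus dlt (F_W dlt F) (Rf x y) (Sf x y)) by reflexivity.
  assert (EKN : onu (K_N dlt F) Rf Sf x y = (- 2 * dplus dlt (F_W dlt F) (Rf x y) (Sf x y) * RtoC (exp (- F (Rf x y) (Sf x y))))%C) by reflexivity.
  rewrite EVV, EWW, EKN. clear EVV EWW EKN.
  unfold onu. rewrite FV_eq, FW_eq.
  rewrite (dplus_HD dlt _ _ _ _ _ HNV), (dminus_HD dlt _ _ _ _ _ HNW), (dplus_HD dlt _ _ _ _ _ HNW).
  clear HNV HNW.
  pose proof (HD_mult _ _ _ _ _ _ _ _ (HD_const (/ 2) x y) (HD_minus _ _ _ _ _ _ _ _ HThx (HD_mult _ _ _ _ _ _ _ _ (HD_const (/ eps) x y) HThy))) as KT.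
  pose proof (HD_mult _ _ _ _ _ _ _ _ (HD_const (/ 2) x y) (HD_minus _ _ _ _ _ _ _ _ HOmx (HD_mult _ _ _ _ _ _ _ _ (HD_const (/ eps) x y) HOmy))) as KO.
  rewrite (dplus_HD eps (dminus eps Th) x y _ _ KT), (dplus_HD eps (dminus eps Om) x y _ _ KO).
  clear KT KO HOmx HOmy HThx HThy.
  destruct (FO x y Hxy) as [A1 B1]. clear FO.
  unfold XA, XB, gC, onu in A1, B1. rewrite FV_eq, FW_eq in A1, B1. cbv beta in *.
  unfold dplus, dminus in A1, B1.
  rewrite (cs_schwarz D Om x y hD hOm Hxy), (cs_schwarz D Th x y hD hTh Hxy) in *.
  rewrite (sm_schwarz E F (Rf x y) (Sf x y) hE hF Hu) in *.
  pushR.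
  pushR_in EAx. pushR_in EAy. pushR_in EBx. pushR_in EBy.
  rewrite (hRx x y Hxy), (hRy x y Hxy), (hSx x y Hxy), (hSy x y Hxy) in *.
  rewrite (exp_rel2 (F (Rf x y) (Sf x y))).
  unfold Ctanh, Ccoth.
  rewrite ?Cexp_2 in *.
  rewrite ?Ccosh_e, ?Csinh_e in *.
  rewrite ?Cexp_opp, ?Cexp_add, ?Cexp_sub, ?Cexp_2 in *.
  pose proof (jacP eps dlt D F Rf Sf Om Th he hd hjac hRx hRy hSx hSy x y Hxy) as HPP.
  assert (HP := Cexp_nz (Om x y)). assert (HT := Cexp_nz (Th x y)).
  assert (Hg := gnz (- F (Rf x y) (Sf x y) / 2)).
  set (P := Cexp (Om x y)) in *. set (T := Cexp (Th x y)) in *.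
  set (g := RtoC (exp (- F (Rf x y) (Sf x y) / 2))) in *.
  set (F1 := RtoC (px F (Rf x y) (Sf x y))) in *.
  set (F2 := RtoC (py F (Rf x y) (Sf x y))) in *.
  set (F11 := RtoC (px (px F) (Rf x y) (Sf x y))) in *.
  set (F12 := RtoC (py (px F) (Rf x y) (Sf x y))) in *.
  set (F22 := RtoC (py (py F) (Rf x y) (Sf x y))) in *.
  set (ox := cpx Om x y) in *. set (oy := cpy Om x y) in *.
  set (tx := cpx Th x y) in *. set (ty := cpy Th x y) in *.
  set (oxx := cpx (cpx Om) x y) in *. set (oxy := cpy (cpx Om) x y) in *. set (oyy := cpy (cpy Om) x y) in *.
  set (txx := cpx (cpx Th) x y) in *. set (txy := cpy (cpx Th) x y) in *. set (tyy := cpy (cpy Th) x y) in *.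
  split; [| split; [| split]].
  4: { apply (lin2 _ _ _ _ _ _ (- eps) (- eps) A1 B1). field. cbv beta. repeat split; auto using Pm1, Pp1, P4nz. }
  3: { apply (lin2 _ _ _ _ _ _ (RtoC 1) (- RtoC 1) A1 B1). field. cbv beta. repeat split; auto using Pm1, Pp1, P4nz. }
  all: lazymatch type of A1 with _ = ?a => lazymatch type of B1 with _ = ?b =>
    assert (Htx : tx = (a + b + / eps * oy)%C) by
      (apply (lin2 _ _ _ _ _ _ (RtoC 1) (RtoC 1) A1 B1); field; auto);
    assert (Hty : ty = (eps * (ox - a + b))%C) by
      (apply (lin2 _ _ _ _ _ _ (- eps) eps A1 B1); field; auto) end end.
  all: rewrite Htx, Hty in EAx, EAy, EBx, EBy.
  - apply (lin4 _ _ _ _ _ _ _ _ _ _ (/ 2) (/ (2 * eps)) (/ 2) (- / (2 * eps)) EAx EAy EBx EBy)%C.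
    field. cbv beta. repeat split; auto using Pm1, Pp1, P4nz.
  - apply (lin4 _ _ _ _ _ _ _ _ _ _ (/ 4) (/ (4 * eps)) (- / 4) (/ (4 * eps)) EAx EAy EBx EBy)%C.
    field. cbv beta. repeat split; auto using Pm1, Pp1, P4nz.
Qed.
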